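(* Let $p$ be an odd prime, $q$ a power of $p$, and $n\ge 0$ an integer. Let $V=\{y\in\mathbb{F}_{q^2}: y^q=1-y\}$ and $S=(\mathbb{F}_q\cup V)\setminus\{\tfrac12\}$. Then $F_n(1,x)$ is a permutation polynomial of $\mathbb{F}_q$ if and only if the map $g:S\to\mathbb{F}_{q^2}$, $g(y)=\dfrac{y^n-(1-y)^n}{2y-1}$, is 2-to-1 (every element of $g(S)$ has exactly two preimages in $S$) and $g(y)\neq \dfrac{n}{2^{n-1}}$ for every $y\in S$.
   Context: For an integer $n\ge 1$, the $n$-th reversed Dickson polynomial of the third kind is $F_n(a,x)=\sum_{i=0}^{\lfloor n/2\rfloor}\frac{n-2i}{n-i}\binom{n-i}{i}(-x)^i a^{n-2i}$, where each coefficient $\frac{n-2i}{n-i}\binom{n-i}{i}$ is an integer (read in $\mathbb{F}_q$), and $F_0(a,x)=0$. A polynomial $f\in\mathbb{F}_q[x]$ is a permutation polynomial of $\mathbb{F}_q$ if $c\mapsto f(c)$ is a bijection of $\mathbb{F}_q$. *)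

(* Defs.v *)
From HB Require Import structures.
From mathcomp Require Import all_boot all_order all_algebra all_field.
Set Implicit Arguments. Unset Strict Implicit. Unset Printing Implicit Defensive.
Import GRing.Theory.
Local Open Scope ring_scope.

(* Integer coefficient (n-2i)/(n-i) * C(n-i,i), computed as an exact
   natural-number division. *)
Definition rd3coef (n i : nat) : nat :=
  (((n - i.*2) * 'C(n - i, i)) %/ (n - i))%N.

(* n-th reversed Dickson polynomial of the third kind F_n(a, x) in R[x];
   F_0 = 0. *)
Definition rdickson3 (R : nzRingType) (n : nat) (a : R) : {poly R} :=
  if n is 0 then 0 else
  \sum_(i < n./2.+1) ((rd3coef n i)%:R * a ^+ (n - i.*2)) *: (- 'X) ^+ i.

Definition bij_on (T : finType) (A : {set T}) (f : T -> T) : Prop :=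
  [/\ {in A, forall x, f x \in A},
      {in A &, injective f} &
      {in A, forall y, exists2 x, x \in A & f x = y}].

Definition Fq (L : finFieldType) (q : nat) : {set L} := [set x : L | x ^+ q == x].
Definition Vset (L : finFieldType) (q : nat) : {set L} :=
  [set y : L | y ^+ q == 1 - y].
Definition Sset (L : finFieldType) (q : nat) : {set L} :=
  (Fq L q :|: Vset L q) :\ (2%:R)^-1.
Definition gmap (L : finFieldType) (n : nat) (y : L) : L :=
  (y ^+ n - (1 - y) ^+ n) / (2%:R * y - 1).

(* Main.v *)
Require Import Defs.
From HB Require Import structures.
From mathcomp Require Import all_boot all_order all_algebra all_field.
From mathcomp Require Import zify ring lra.
Import GRing.Theory.
Local Open Scope ring_scope.
Section Alg.
Variable L : fieldType.

Definition Tm (m : nat) (x : L) : L :=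
  \sum_(i < m.+1) ('C(m - i, i))%:R * (- x) ^+ i.

Lemma sum_widen (f : nat -> L) a b : (a <= b)%N -> (forall i, (a <= i)%N -> f i = 0) ->
  \sum_(i < a) f i = \sum_(i < b) f i.
Proof.
move=> hab hz; rewrite -!(big_mkord xpredT) (big_cat_nat (leq0n a) hab) /=.
rewrite -[LHS]addr0; congr (_ + _); symmetry.
rewrite big_nat_cond; apply: big1 => i /andP[/andP[hi _] _]; exact: hz.
Qed.

Lemma Tm_wide m N x : (m < N)%N -> Tm m x = \sum_(i < N) ('C(m - i, i))%:R * (- x) ^+ i.
Proof.
move=> h; apply: (sum_widen (fun i => ('C(m - i, i))%:R * (- x) ^+ i)) => // i hi.
by rewrite bin_small ?mul0r //; lia.
Qed.

Lemma binT m i : 'C(m.+1 - i, i.+1) = ('C(m - i, i.+1) + 'C(m - i, i))%N.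
Proof.
case: (leqP i m) => h; first by rewrite subSn // binS.
have -> : (m.+1 - i = 0)%N by lia.
have -> : (m - i = 0)%N by lia.
by rewrite !bin0n; case: i h.
Qed.

Lemma Tm_rec m x : Tm m.+2 x = Tm m.+1 x - x * Tm m x.
Proof.
rewrite (Tm_wide m m.+2 x) // (Tm_wide m.+1 m.+3 x) // /Tm.
rewrite big_ord_recl [X in _ = X - _]big_ord_recl /= !subn0 !bin0 -addrA; congr (_ + _).
rewrite mulr_sumr -sumrB; apply: eq_bigr => i _.
rewrite /bump /= !add1n !subSS binT natrD exprS; ring.
Qed.

Lemma Tm0 x : Tm 0 x = 1.
Proof. by rewrite /Tm big_ord1 /= bin0 mul1r expr0. Qed.

Lemma Tm1 x : Tm 1 x = 1.
Proof. by rewrite /Tm big_ord_recl big_ord1 /= bin0 bin0n mul1r expr0 mul0r addr0. Qed.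

Lemma Tm_closed y m :
  (2%:R * y - 1) * Tm m (y * (1 - y)) = y ^+ m.+1 - (1 - y) ^+ m.+1.
Proof.
suff: forall m, (2%:R * y - 1) * Tm m (y * (1 - y)) = y ^+ m.+1 - (1 - y) ^+ m.+1 /\
  (2%:R * y - 1) * Tm m.+1 (y * (1 - y)) = y ^+ m.+2 - (1 - y) ^+ m.+2 by move=> /(_ m) [].
elim=> [|k [IH1 IH2]].
  by rewrite Tm0 Tm1 !expr1 !expr2; split; ring.
split=> //; rewrite Tm_rec mulrBr mulrCA IH2 IH1.
rewrite !(exprS y) !(exprS (1 - y)); ring.
Qed.

Lemma Tm_quarter m : (2%:R : L) != 0 ->
  Tm m (2%:R^-1 * (1 - 2%:R^-1)) * 2%:R ^+ m = (m.+1)%:R.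
Proof.
move=> h2.
suff: forall m, Tm m (2%:R^-1 * (1 - 2%:R^-1)) * 2%:R ^+ m = (m.+1)%:R /\
  Tm m.+1 (2%:R^-1 * (1 - 2%:R^-1)) * 2%:R ^+ m.+1 = (m.+2)%:R by move=> /(_ m) [].
elim=> [|k [IH1 IH2]].
  rewrite Tm0 Tm1 expr0 expr1 mulr1 mul1r; split=> //; ring.
split=> //; move: IH1 IH2; set T0 := Tm k _; set T1 := Tm k.+1 _.
rewrite Tm_rec -/T0 -/T1 => IH1 IH2.
have -> : (T1 - (2%:R^-1 * (1 - 2%:R^-1)) * T0) * 2%:R ^+ k.+2 =
  2%:R * (T1 * 2%:R ^+ k.+1) - 2%:R * (2%:R * 2%:R^-1) * (1 - 2%:R^-1) * (T0 * 2%:R ^+ k).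
  rewrite !exprS; ring.
rewrite IH1 IH2 mulfV // -[(k.+3)%:R]natr1 -[(k.+2)%:R]natr1 -[(k.+1)%:R]natr1.
field; exact: h2.
Qed.

Lemma half_facts n : (n./2 + n./2 <= n /\ n <= n./2 + n./2 + 1)%N.
Proof.
have := odd_double_half n; rewrite -addnn; case: (odd n) => /=; lia.
Qed.

Lemma horner_rd3 n c : (rdickson3 n (1 : L)).[c] = if n is m.+1 then Tm m c else 0.
Proof.
case: n => [|m]; first by rewrite /rdickson3 horner0.
rewrite /rdickson3 horner_sum.
transitivity (\sum_(i < (m.+1)./2.+1) ('C(m - i, i))%:R * (- c) ^+ i).
  apply: eq_bigr => i _; rewrite hornerZ expr1n mulr1 horner_exp hornerN hornerX.
  congr (_ * _); congr (_%:R); rewrite /rd3coef.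
  have hi : (i <= m)%N.
    have := ltn_ord i; have := half_facts m.+1; lia.
  have -> : (m.+1 - i.*2 = m.+1 - i - i)%N by lia.
  rewrite -mul_bin_down mulKn; last by lia.
  by congr 'C(_, _); lia.
rewrite /Tm; apply: (sum_widen (fun i => ('C(m - i, i))%:R * (- c) ^+ i)).
  have := half_facts m.+1; lia.
move=> i hi; rewrite bin_small ?mul0r //.
have := half_facts m.+1; lia.
Qed.

End Alg.
Arguments Tm {L}.
Section FF.
Variables (L : finFieldType) (p k q : nat).
Hypotheses (pp : prime p) (op : odd p) (kp : (0 < k)%N) (hq : q = (p ^ k)%N)
  (hL : #|L| = (q ^ 2)%N).

Lemma chp : p \in [pchar L].
Proof. by apply: (@card_finPcharP _ _ (k * 2)) => //; rewrite hL hq expnM. Qed.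

Lemma qnat : [pchar L].-nat q.
Proof. by rewrite hq (eq_pnat _ (pcharf_eq chp)) pnatX pnat_id. Qed.

Lemma q_gt0 : (0 < q)%N.
Proof. by rewrite hq expn_gt0 prime_gt0. Qed.

Lemma two_nz : (2%:R : L) != 0.
Proof.
apply/negP => h2; have : 2%N \in [pchar L] by rewrite inE h2 andbT.
rewrite (pcharf_eq chp) inE => /eqP h; move: op; by rewrite -h.
Qed.

Lemma frobD a b : (a + b) ^+ q = a ^+ q + b ^+ q :> L.
Proof. exact: exprDn_pchar qnat. Qed.
Lemma frobN a : (- a) ^+ q = - a ^+ q :> L.
Proof. exact: exprNn_pchar qnat. Qed.
Lemma frobB a b : (a - b) ^+ q = a ^+ q - b ^+ q :> L.
Proof. by rewrite frobD frobN. Qed.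
Lemma frob_nat n : (n%:R : L) ^+ q = n%:R.
Proof.
elim: n => [|n IH]; first by rewrite expr0n eqn0Ngt q_gt0.
by rewrite -natr1 frobD IH expr1n.
Qed.
Lemma frob_sum N (F : 'I_N -> L) : (\sum_(i < N) F i) ^+ q = \sum_(i < N) F i ^+ q.
Proof.
apply: (big_morph (fun a : L => a ^+ q)); first exact: frobD.
by rewrite expr0n eqn0Ngt q_gt0.
Qed.

Lemma Tm_frob m (c : L) : (Tm m c) ^+ q = Tm m (c ^+ q).
Proof.
rewrite /Tm frob_sum; apply: eq_bigr => i _.
by rewrite exprMn frob_nat -exprM mulnC exprM frobN.
Qed.

Lemma sqrt_ex d : d != 0 -> d ^+ q = d -> exists s : L, s ^+ 2 = d.
Proof.
move=> dnz dq.
have qodd : odd q by rewrite hq oddX op orbT.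
set r := q./2.
have hqr : q = (r.*2).+1 by have := odd_double_half q; rewrite qodd.
have d1 : d ^+ (r.*2) = 1.
  apply: (mulfI dnz); rewrite mulr1 -exprS -hqr; exact: dq.
set m := (r.*2 * r.+1)%N.
have dm : d ^+ m = 1 by rewrite exprM d1 expr1n.
have hcard : #|L| = (m.*2).+1.
  rewrite hL hqr /m -!addnn; nia.
have hdiv : ('X^2 - d%:P) %| \prod_(x : L) ('X - x%:P).
  rewrite -finField_genPoly hcard.
  have -> : 'X^((m.*2).+1) - 'X = 'X * (('X^2) ^+ m - (d%:P) ^+ m) :> {poly L}.
    by rewrite -polyC_exp dm mulrBr mulr1 -exprM mul2n -exprS.
  rewrite subrXX mulrCA; apply: dvdp_mulr; exact: dvdpp.
have [msk Hm] := @dvdp_prod_XsubC L L (index_enum L) id _ hdiv.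
case E: (mask msk (index_enum L)) Hm => [|a s] Hm.
  move: (eqp_size Hm); rewrite big_nil size_XnsubC // size_poly1; discriminate.
exists a; have : root ('X^2 - d%:P) a.
  rewrite (eqp_root Hm) /=; apply/rootP; rewrite big_cons hornerM.
  by rewrite hornerXsubC subrr mul0r.
by rewrite rootE !hornerE subr_eq0 => /eqP.
Qed.


Definition phi (y : L) := y * (1 - y).
Definition hh : L := 2%:R^-1 * (1 - 2%:R^-1).
Local Notation A := (Fq L q).
Local Notation S := (Sset L q).

Lemma inAE c : (c \in A) = (c ^+ q == c).
Proof. by rewrite inE. Qed.

Lemma inSE y : (y \in S) = (y != 2%:R^-1) && ((y ^+ q == y) || (y ^+ q == 1 - y)).
Proof. by rewrite !inE. Qed.

Lemma phi_eq y z : phi y = phi z -> z = y \/ z = 1 - y.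
Proof.
move/eqP; rewrite -subr_eq0.
have -> : phi y - phi z = (z - y) * (z - (1 - y)) by rewrite /phi; ring.
by rewrite mulf_eq0 !subr_eq0 => /orP[/eqP -> | /eqP ->]; [left | right].
Qed.

Lemma phi_frob y : phi (y ^+ q) = (phi y) ^+ q.
Proof. by rewrite /phi exprMn frobB expr1n. Qed.

Lemma S_nz y : y \in S -> 2%:R * y - 1 != 0.
Proof.
rewrite inSE => /andP[hy _]; apply: contra hy => /eqP h.
apply/eqP; have h2 := two_nz.
have -> : y = (2%:R * y - 1 + 1) / 2%:R by field.
by rewrite h add0r mul1r.
Qed.

Lemma phiS y : y \in S -> phi y \in A /\ phi y != hh.
Proof.
move=> yS; have := yS; rewrite inSE => /andP[hy /orP[] /eqP hq'].
- split; first by rewrite inAE -phi_frob hq'.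
  apply/eqP => E; move/eqP: (@S_nz y yS); apply; have h2 := two_nz.
  have : (2%:R * y - 1) ^+ 2 = 0.
    have -> : (2%:R * y - 1) ^+ 2 = 2%:R * 2%:R * (hh - phi y) by rewrite /hh /phi; field.
    by rewrite E subrr mulr0.
  by move/eqP; rewrite expf_eq0 => /eqP.
- split; first by rewrite inAE -phi_frob hq' /phi; apply/eqP; ring.
  apply/eqP => E; move/eqP: (@S_nz y yS); apply; have h2 := two_nz.
  have : (2%:R * y - 1) ^+ 2 = 0.
    have -> : (2%:R * y - 1) ^+ 2 = 2%:R * 2%:R * (hh - phi y) by rewrite /hh /phi; field.
    by rewrite E subrr mulr0.
  by move/eqP; rewrite expf_eq0 => /eqP.
Qed.

Lemma S_sym y : y \in S -> 1 - y \in S /\ 1 - y != y.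
Proof.
move=> yS; have ynz := @S_nz y yS; split.
  move: yS; rewrite !inSE frobB expr1n => /andP[hy /orP[] /eqP ->].
    rewrite eqxx orTb andbT; apply: contra hy => /eqP E; apply/eqP.
    have h2 := two_nz. have -> : y = 1 - (1 - y) by ring.
    by rewrite E; field.
  rewrite (_ : 1 - (1 - y) = y) ?eqxx; last by ring.
  rewrite orbT andbT; apply: contra hy => /eqP E; apply/eqP.
  have h2 := two_nz. have -> : y = 1 - (1 - y) by ring.
  by rewrite E; field.
apply: contra ynz => /eqP E; apply/eqP.
have -> : 2%:R * y - 1 = - ((1 - y) - y) by rewrite mulr2n; ring.
by rewrite E subrr oppr0.
Qed.

Lemma hhA : hh \in A.
Proof. by rewrite inAE /hh exprMn frobB expr1n exprVn frob_nat. Qed.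

Lemma fA n c : c \in A -> (rdickson3 n (1 : L)).[c] \in A.
Proof.
rewrite !inAE horner_rd3; case: n => [|m]; first by rewrite expr0n eqn0Ngt q_gt0.
by rewrite Tm_frob => /eqP ->.
Qed.

Lemma f_g n y : 2%:R * y - 1 != 0 -> (rdickson3 n (1 : L)).[phi y] = gmap n y.
Proof.
move=> ynz; rewrite horner_rd3 /gmap; case: n => [|m].
  by rewrite !expr0 subrr mul0r.
by rewrite -Tm_closed [_ * Tm _ _]mulrC mulfK.
Qed.

Lemma f_hh n : (rdickson3 n (1 : L)).[hh] = n%:R / 2%:R ^+ n.-1.
Proof.
rewrite horner_rd3; case: n => [|m]; first by rewrite mul0r.
rewrite -(@Tm_quarter L m two_nz) mulfK //; exact: expf_neq0 two_nz.
Qed.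

Lemma phi_surj x : x \in A -> x != hh -> exists2 y, y \in S & phi y = x.
Proof.
rewrite inAE => /eqP xq xh; have h2 := two_nz.
have h4 : (4%:R : L) != 0 by rewrite (natrM _ 2 2) mulf_neq0.
set d := 1 - 2%:R * 2%:R * x.
have dE : d = 2%:R * 2%:R * (hh - x) by rewrite /d /hh; field.
have dnz : d != 0.
  by rewrite dE !mulf_neq0 // subr_eq0 eq_sym.
have dq : d ^+ q = d by rewrite /d frobB expr1n !exprMn frob_nat xq.
have [s hs] := @sqrt_ex d dnz dq.
set y := (1 + s) / 2%:R.
have hphi : phi y = x.
  have hx : x = (1 - s ^+ 2) / (2%:R * 2%:R).
    by rewrite hs /d; field.
  by rewrite hx /phi /y; field; rewrite h4 h2.
exists y => //; rewrite inSE; apply/andP; split.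
  apply/negP => /eqP hy.
  have : s = 2%:R * y - 1 by rewrite /y; field.
  rewrite hy mulfV // subrr => s0.
  by move: dnz; rewrite -hs s0 expr0n /= eqxx.
have : phi (y ^+ q) = phi y by rewrite phi_frob hphi xq.
by case/esym/phi_eq => ->; rewrite eqxx ?orbT.
Qed.


Lemma main n :
  (bij_on (Fq L q) (fun c : L => (rdickson3 n (1 : L)).[c])
   <->
   ((forall y, y \in Sset L q ->
       #|[set z in Sset L q | gmap n z == gmap n y]| = 2%N) /\
    (forall y, y \in Sset L q ->
       gmap n y != n%:R / (2%:R) ^+ (n.-1)))).
Proof.
set f := fun c : L => (rdickson3 n (1 : L)).[c].
split.
  case=> fmap finj fsurj; split=> y yS.
    have [yA yh] := @phiS y yS.
    have [y'S y'ne] := @S_sym y yS.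
    have -> : [set z in S | gmap n z == gmap n y] = [set y; 1 - y].
      apply/setP => z; rewrite in_set in_set2; apply/idP/idP.
        case/andP=> zS /eqP gz.
        have [zA _] := @phiS z zS.
        have : phi y = phi z.
          apply: finj => //; rewrite /f !f_g ?(@S_nz y yS) ?(@S_nz z zS) //.
        by case/phi_eq => ->; rewrite eqxx ?orbT.
      case/orP => /eqP ->; first by rewrite yS eqxx.
      rewrite y'S /= -f_g; last exact: (@S_nz _ y'S).
      rewrite -f_g; last exact: (@S_nz y yS).
      by rewrite (_ : phi (1 - y) = phi y) // /phi; ring.
    by rewrite cards2 eq_sym y'ne.
  have [yA yh] := @phiS y yS.
  rewrite -f_g; last exact: (@S_nz y yS).
  rewrite -f_hh; apply/negP => /eqP E.
  by move: yh; rewrite (finj _ _ yA hhA E) eqxx.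
case=> H2 Hne.
have key : forall c, c \in A -> c != hh -> f c != f hh.
  move=> c cA ch; have [y yS <-] := @phi_surj c cA ch.
  by rewrite /f f_g ?f_hh; [exact: Hne | exact: (@S_nz y yS)].
have finj : {in A &, injective f}.
  move=> c1 c2 h1 h2 E.
  case: (eqVneq c1 hh) => [e1|n1]; case: (eqVneq c2 hh) => [e2|n2].
  - by rewrite e1 e2.
  - by move: (key c2 h2 n2); rewrite -E e1 eqxx.
  - by move: (key c1 h1 n1); rewrite E e2 eqxx.
  have [y1 y1S py1] := @phi_surj c1 h1 n1.
  have [y2 y2S py2] := @phi_surj c2 h2 n2.
  have [y1'S y1ne] := @S_sym y1 y1S.
  have g12 : gmap n y2 = gmap n y1.
    by rewrite -!f_g ?py1 ?py2; [exact: esym E | exact: (@S_nz y1 y1S) | exact: (@S_nz y2 y2S)].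
  have sub : [set y1; 1 - y1] \subset [set z in S | gmap n z == gmap n y1].
    apply/subsetP => z; rewrite in_set2 in_set => /orP[] /eqP ->; first by rewrite y1S eqxx.
    rewrite y1'S /= -f_g; last exact: (@S_nz _ y1'S).
    rewrite -f_g; last exact: (@S_nz y1 y1S).
    by rewrite (_ : phi (1 - y1) = phi y1) // /phi; ring.
  have eqF : [set y1; 1 - y1] = [set z in S | gmap n z == gmap n y1].
    by apply/eqP; rewrite eqEcard sub H2 // cards2 eq_sym y1ne.
  have : y2 \in [set z in S | gmap n z == gmap n y1] by rewrite in_set y2S g12 eqxx.
  rewrite -eqF in_set2 => /orP[] /eqP e.
    by rewrite -py1 -py2 e.
  by rewrite -py1 -py2 e /phi; ring.
split => //.
- by move=> c cA; apply: fA.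
move=> y yA.
have subA : f @: A \subset A by apply/subsetP => z /imsetP[c cA ->]; apply: fA.
have : f @: A == A by rewrite eqEcard subA (card_in_imset finj) leqnn.
move/eqP => eqA; have : y \in f @: A by rewrite eqA.
by case/imsetP => c cA ->; exists c.
Qed.

End FF.

Theorem theorem2p10 (p k q n : nat) (L : finFieldType) :
  prime p -> odd p -> (0 < k)%N -> q = (p ^ k)%N -> #|L| = (q ^ 2)%N ->
  (bij_on (Fq L q) (fun c : L => (rdickson3 n (1 : L)).[c])
   <->
   ((forall y, y \in Sset L q ->
       #|[set z in Sset L q | gmap n z == gmap n y]| = 2%N) /\
    (forall y, y \in Sset L q ->
       gmap n y != n%:R / (2%:R) ^+ (n.-1)))).
Proof. by move=> pp op kp hq hL; exact: (@main L p k q pp op kp hq hL n). Qed.
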